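(* Let $n$ be a positive integer and suppose there exists a 1-D $(n,4,2)$-OOC with exactly $J(1\times n,4,2)$ codewords. (1) If $n\equiv 1,3\pmod 6$ or $n\equiv 2,10\pmod{24}$, then for every factorization $n=uv$ with $u,v$ positive integers there exists a 2-D $(u\times v,4,2)$-OOC with exactly $J(u\times v,4,2)$ codewords. (2) If $n\equiv 4,20\pmod{24}$ and $n=2n_1$, then there exists a 2-D $(2\times n_1,4,2)$-OOC with exactly $J(2\times n_1,4,2)$ codewords.
   Context: A two-dimensional $(u\times v,k,\lambda)$ optical orthogonal code (2-D $(u\times v,k,\lambda)$-OOC) is a family $\mathcal C$ of $u\times v$ $(0,1)$-matrices, each of Hamming weight $k$, such that for all $A=(a_{ij}),B=(b_{ij})\in\mathcal C$ and every integer $r$ with $A\neq B$ or $r\not\equiv 0\pmod v$, one has $\sum_{i=0}^{u-1}\sum_{j=0}^{v-1}a_{ij}b_{i,j+r}\le\lambda$, column indices taken modulo $v$. A 1-D $(v,k,\lambda)$-OOC is a 2-D $(1\times v,k,\lambda)$-OOC. For $k=4,\lambda=2$ the Johnson bound is $J(u\times v,4,2)=\lfloor\frac{u}{4}\lfloor\frac{uv-1}{3}\lfloor\frac{uv-2}{2}\rfloor\rfloor\rfloor$. *)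

(* Defs.v *)
From mathcomp Require Import all_boot all_algebra.
Set Implicit Arguments. Unset Strict Implicit. Unset Printing Implicit Defensive.

Lemma ord_pos (v : nat) (j : 'I_v) : 0 < v.
Proof. exact: leq_ltn_trans (leq0n j) (ltn_ord j). Qed.

Definition colshift (v : nat) (j : 'I_v) (r : nat) : 'I_v :=
  Ordinal (ltn_pmod (j + r) (ord_pos j)).

Definition hweight (u v : nat) (A : 'M[bool]_(u, v)) : nat :=
  \sum_(i < u) \sum_(j < v) (A i j : nat).

Definition corr (u v : nat) (A B : 'M[bool]_(u, v)) (r : nat) : nat :=
  \sum_(i < u) \sum_(j < v) ((A i j && B i (colshift j r)) : nat).

(* 2-D (u x v, k, lambda)-OOC.  Shifts r range over nat; since column indices
   are taken mod v, this covers every integer shift. *)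
Definition is_OOC (u v k lam : nat) (C : {set 'M[bool]_(u, v)}) : Prop :=
  (forall A, A \in C -> hweight A = k) /\
  (forall A B (r : nat), A \in C -> B \in C ->
     (A != B) || (r %% v != 0) -> corr A B r <= lam).

(* Johnson bound J(u x v, 4, 2) = floor(u/4 floor((uv-1)/3 floor((uv-2)/2))) *)
Definition J42 (u v : nat) : nat :=
  (u * (((u * v - 1) * ((u * v - 2) %/ 2)) %/ 3)) %/ 4.

(* Main.v *)
Require Import Defs.
From mathcomp Require Import all_boot all_algebra.
From mathcomp Require Import zify.

Set Implicit Arguments. Unset Strict Implicit. Unset Printing Implicit Defensive.

Section Constr.
Variables (N : nat) (hN : 0 < N).

Definition at1 (A : 'M[bool]_(1, N)) (x : nat) : bool :=
  A ord0 (Ordinal (ltn_pmod x hN)).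

Lemma at1_mod A x : at1 A (x %% N) = at1 A x.
Proof. by rewrite /at1; congr (A _ _); apply: val_inj => /=; rewrite modn_mod. Qed.

Lemma at1_ord A (j : 'I_N) : at1 A j = A ord0 j.
Proof. by rewrite /at1; congr (A _ _); apply: val_inj => /=; rewrite modn_small. Qed.

End Constr.

Lemma sum_grid u v (G : nat -> nat) :
  \sum_(i < u) \sum_(j < v) G (i + u * j) = \sum_(x < u * v) G x.
Proof.
rewrite exchange_big /=.
elim: v => [|v IH]; first by rewrite muln0 !big_ord0.
rewrite big_ord_recr /= IH.
rewrite -[RHS](big_mkord xpredT) (@big_cat_nat _ _ _ (u * v)) //=; last by lia.
congr (_ + _); first by rewrite big_mkord.
symmetry; rewrite -{1}(add0n (u * v)) big_addn mulnS addnK big_mkord.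
by apply: eq_bigr => i _; rewrite addnC.
Qed.

Lemma sum_succ N (F : nat -> nat) : 0 < N -> (forall x, F (x %% N) = F x) ->
  \sum_(x < N) F x.+1 = \sum_(x < N) F x.
Proof.
case: N => // N _ HF.
rewrite -(big_mkord xpredT (fun x => F x.+1)) -(big_mkord xpredT F).
rewrite big_nat_recr //= big_nat_recl //=.
by rewrite -[F N.+1]HF modnn addnC.
Qed.

Lemma sum_rot N (F : nat -> nat) a : 0 < N -> (forall x, F (x %% N) = F x) ->
  \sum_(x < N) F (x + a) = \sum_(x < N) F x.
Proof.
move=> hN HF; elim: a => [|a IH].
  by apply: eq_bigr => i _; rewrite addn0.
rewrite -IH -(@sum_succ N (fun x => F (x + a))) //.
  by apply: eq_bigr => i _; rewrite addnS.
by move=> x /=; rewrite -HF modnDml HF.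
Qed.

Lemma sum_reindex N u v a (F : nat -> nat) : u * v = N -> 0 < N ->
  (forall x, F (x %% N) = F x) ->
  \sum_(i < u) \sum_(j < v) F (i + u * j + a) = \sum_(x < N) F x.
Proof.
move=> huv hN HF; subst N.
by rewrite (sum_grid u v (fun x => F (x + a))) sum_rot.
Qed.

Section Mk.
Variables (N : nat) (hN : 0 < N) (u v : nat) (huv : u * v = N).

Definition mk (A : 'M[bool]_(1, N)) (a : nat) : 'M[bool]_(u, v) :=
  \matrix_(i, j) at1 hN A (i + u * j + a).

Lemma hweight1 (A : 'M[bool]_(1, N)) :
  hweight A = \sum_(x < N) (at1 hN A x : nat).
Proof.
rewrite /hweight big_ord1; apply: eq_bigr => j _; by rewrite at1_ord.
Qed.

Lemma hweight_mk A a : hweight (mk A a) = hweight A.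
Proof.
rewrite hweight1 /hweight -(@sum_reindex N u v a (fun x => (at1 hN A x : nat))) //.
- by apply: eq_bigr => i _; apply: eq_bigr => j _; rewrite mxE.
- by move=> x; rewrite at1_mod.
Qed.

Lemma corr1 (A B : 'M[bool]_(1, N)) s :
  corr A B s = \sum_(x < N) ((at1 hN A x && at1 hN B (x + s)) : nat).
Proof.
rewrite /corr big_ord1; apply: eq_bigr => j _; rewrite at1_ord.
by congr (nat_of_bool (_ && _)); rewrite /at1; congr (B _ _); apply: val_inj.
Qed.

Lemma corr_mk A B a b r : a <= N ->
  corr (mk A a) (mk B b) r = corr A B (u * r + b + N - a).
Proof.
move=> haN; rewrite corr1 /corr.
rewrite -(@sum_reindex N u v a (fun x => ((at1 hN A x && at1 hN B (x + (u * r + b + N - a))) : nat))).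
- apply: eq_bigr => i _; apply: eq_bigr => j _; rewrite !mxE /=.
  congr (nat_of_bool (_ && _)).
  rewrite -at1_mod -[RHS]at1_mod; congr (at1 _ _ _).
  have e := divn_eq (j + r) v.
  set q := (j + r) %/ v in e *; set rr := (j + r) %% v in e *.
  have -> : i + u * j + a + (u * r + b + N - a) = i + u * rr + b + N * q.+1.
    rewrite -huv; nia.
  by rewrite [in RHS]addnC [N * _]mulnC modnMDl.
- by [].
- by [].
- move=> x /=; rewrite at1_mod; congr (nat_of_bool (_ && _)).
  by rewrite -at1_mod modnDml at1_mod.
Qed.

End Mk.

Lemma corr_self u v (M : 'M[bool]_(u, v)) : corr M M 0 = hweight M.
Proof.
apply: eq_bigr => i _; apply: eq_bigr => j _.
have -> : colshift j 0 = j by apply: val_inj => /=; rewrite addn0 modn_small.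
by rewrite andbb.
Qed.

Lemma mul_rem u x y c : 0 < u -> u * x + c = u * y -> c < u -> c = 0 /\ x = y.
Proof.
move=> hu e hc; case: (ltngtP x y) => hxy.
- have : u * x.+1 <= u * y by rewrite leq_mul2l hxy orbT.
  rewrite mulnS; lia.
- have : u * y.+1 <= u * x by rewrite leq_mul2l hxy orbT.
  rewrite mulnS; lia.
- subst; lia.
Qed.

Lemma numth u v a b r k : 0 < u -> 0 < v -> a < u -> b < u ->
  u * r + b + u * v - a = k * (u * v) -> a = b /\ r %% v = 0.
Proof.
move=> hu hv ha hb e.
have hab : a = b.
  case: (leqP a b) => hab.
  - have [c0 _] := @mul_rem u (r + v) (v * k) (b - a) hu ltac:(nia) ltac:(lia).
    lia.
  - have [c0 _] := @mul_rem u (r + v).-1 (v * k) (u + b - a) hu ltac:(nia) ltac:(lia).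
    lia.
subst b; split => //.
have [_ e2] := @mul_rem u (r + v) (v * k) 0 hu ltac:(nia) hu.
by rewrite -(modnDr r v) e2 mulnC modnMl.
Qed.

Lemma construct N (hN : 0 < N) u v (hu : 0 < u) (hv : 0 < v) (huv : u * v = N)
  (C : {set 'M[bool]_(1, N)}) : is_OOC 4 2 C ->
  exists C2 : {set 'M[bool]_(u, v)}, is_OOC 4 2 C2 /\ #|C2| = #|C| * u.
Proof.
move=> [Hw Hc].
pose f (p : 'M[bool]_(1, N) * 'I_u) := mk hN u v p.1 p.2.
have aN (a : 'I_u) : a <= N.
  by rewrite -huv; apply: leq_trans (ltnW (ltn_ord a)) _; rewrite leq_pmulr.
exists (f @: setX C [set: 'I_u]); split; last first.
  rewrite card_in_imset ?cardsX ?cardsT ?card_ord //.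
  move=> [A a] [B b]; rewrite !inE /= => /andP [hA _] /andP [hB _]; rewrite /f /= => E.
  have h4 : corr A B (u * 0 + b + N - a) = 4.
    by rewrite -(corr_mk hN huv) // E corr_self (hweight_mk hN huv) Hw.
  case: (eqVneq A B) => hAB; last first.
    by have := Hc A B (u * 0 + b + N - a) hA hB; rewrite hAB h4; move=> /(_ isT).
  subst B.
  case: (eqVneq ((u * 0 + b + N - a) %% N) 0) => hm; last first.
    by have := Hc A A (u * 0 + b + N - a) hA hA; rewrite hm orbT h4; move=> /(_ isT).
  have e := divn_eq (u * 0 + b + N - a) N; rewrite hm addn0 -huv in e.
  have [hab _] := numth hu hv (ltn_ord a) (ltn_ord b) e.
  by congr (_, _); apply: val_inj.
split.
  move=> M /imsetP [[A a]]; rewrite !inE /= => /andP [hA _] ->.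
  by rewrite /f (hweight_mk hN huv) Hw.
move=> M1 M2 r /imsetP [[A a]]; rewrite !inE /= => /andP [hA _] ->.
move=> /imsetP [[B b]]; rewrite !inE /= => /andP [hB _] -> H.
rewrite /f /= (corr_mk hN huv) //.
case: (eqVneq A B) => hAB; first last.
  by apply: Hc => //; rewrite hAB.
subst B.
case: (eqVneq ((u * r + b + N - a) %% N) 0) => hm; last first.
  by apply: Hc => //; rewrite hm orbT.
have e := divn_eq (u * r + b + N - a) N; rewrite hm addn0 -huv in e.
have [hab hr] := numth hu hv (ltn_ord a) (ltn_ord b) e.
have hab' : a = b by apply: val_inj.
by move: H; rewrite hab' eqxx hr.
Qed.

Definition Xn n := ((n - 1) * ((n - 2) %/ 2)) %/ 3.

Lemma Xform m s c K : (24 * m + s - 1) %/ 2 = 12 * m + c -> s * c = 3 * K ->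
  Xn (24 * m + s + 1) %% 4 = K %% 4.
Proof.
move=> h1 h2; rewrite /Xn.
have -> : 24 * m + s + 1 - 1 = 24 * m + s by lia.
have -> : 24 * m + s + 1 - 2 = 24 * m + s - 1 by lia.
rewrite h1.
have -> : (24 * m + s) * (12 * m + c) = 3 * (4 * (24 * m * m + (2 * c + s) * m) + K) by lia.
rewrite mulKn //; lia.
Qed.

Lemma X_part1 n : (n %% 6 == 1) || (n %% 6 == 3) || (n %% 24 == 2) || (n %% 24 == 10) ->
  Xn n %% 4 = 0.
Proof.
move=> H.
have e : n = 24 * (n %/ 24) + n %% 24 by rewrite {1}(divn_eq n 24) mulnC.
set m := n %/ 24 in e.
have : n %% 24 = 1 \/ n %% 24 = 3 \/ n %% 24 = 7 \/ n %% 24 = 9 \/ n %% 24 = 13 \/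
       n %% 24 = 15 \/ n %% 24 = 19 \/ n %% 24 = 21 \/ n %% 24 = 2 \/ n %% 24 = 10.
  move: H => /orP [/orP [/orP [/eqP H|/eqP H]|/eqP H]|/eqP H]; lia.
case=> [h|[h|[h|[h|[h|[h|[h|[h|[h|h]]]]]]]]]; rewrite h in e; rewrite e.
- case: m e => [|m] e; first by [].
  have -> : 24 * m.+1 + 1 = 24 * m + 24 + 1 by lia.
  by rewrite (@Xform m 24 11 88) //; lia.
- by rewrite (_ : 24 * m + 3 = 24 * m + 2 + 1); [rewrite (@Xform m 2 0 0) //; lia | lia].
- by rewrite (_ : 24 * m + 7 = 24 * m + 6 + 1); [rewrite (@Xform m 6 2 4) //; lia | lia].
- by rewrite (_ : 24 * m + 9 = 24 * m + 8 + 1); [rewrite (@Xform m 8 3 8) //; lia | lia].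
- by rewrite (_ : 24 * m + 13 = 24 * m + 12 + 1); [rewrite (@Xform m 12 5 20) //; lia | lia].
- by rewrite (_ : 24 * m + 15 = 24 * m + 14 + 1); [rewrite (@Xform m 14 6 28) //; lia | lia].
- by rewrite (_ : 24 * m + 19 = 24 * m + 18 + 1); [rewrite (@Xform m 18 8 48) //; lia | lia].
- by rewrite (_ : 24 * m + 21 = 24 * m + 20 + 1); [rewrite (@Xform m 20 9 60) //; lia | lia].
- by rewrite (_ : 24 * m + 2 = 24 * m + 1 + 1); [rewrite (@Xform m 1 0 0) //; lia | lia].
- by rewrite (_ : 24 * m + 10 = 24 * m + 9 + 1); [rewrite (@Xform m 9 4 12) //; lia | lia].
Qed.

Lemma X_part2 n : (n %% 24 == 4) || (n %% 24 == 20) -> Xn n %% 4 = 1.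
Proof.
move=> H.
have e : n = 24 * (n %/ 24) + n %% 24 by rewrite {1}(divn_eq n 24) mulnC.
set m := n %/ 24 in e.
move: H => /orP [/eqP h|/eqP h]; rewrite h in e; rewrite e.
- by rewrite (_ : 24 * m + 4 = 24 * m + 3 + 1); [rewrite (@Xform m 3 1 1) //; lia | lia].
- by rewrite (_ : 24 * m + 20 = 24 * m + 19 + 1); [rewrite (@Xform m 19 9 57) //; lia | lia].
Qed.

Theorem corollary2p5 (n : nat) (hn : 0 < n)
  (h1 : exists C : {set 'M[bool]_(1, n)}, is_OOC 4 2 C /\ #|C| = J42 1 n) :
  ((n %% 6 \in [:: 1; 3]) || (n %% 24 \in [:: 2; 10]) ->
     forall u v : nat, 0 < u -> 0 < v -> u * v = n ->
       exists C : {set 'M[bool]_(u, v)}, is_OOC 4 2 C /\ #|C| = J42 u v) /\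
  (n %% 24 \in [:: 4; 20] -> forall n1 : nat, n = 2 * n1 ->
       exists C : {set 'M[bool]_(2, n1)}, is_OOC 4 2 C /\ #|C| = J42 2 n1).
Proof.
have [C [HC Hcard]] := h1.
have J1 : J42 1 n = Xn n %/ 4 by rewrite /J42 !mul1n.
split.
  rewrite !inE => H u v hu hv huv.
  have [C2 [HC2 Hc2]] := construct hn hu hv huv HC.
  exists C2; split => //.
  have hX : Xn n %% 4 = 0.
    by apply: X_part1; move: H; rewrite -!orbA.
  rewrite Hc2 Hcard J1 /J42 huv -/(Xn n).
  have eX := divn_eq (Xn n) 4; rewrite hX addn0 in eX.
  move: eX; set q := Xn n %/ 4 => ->; lia.
rewrite !inE => H n1 hn1.
have hn1p : 0 < n1 by lia.
have [C2 [HC2 Hc2]] := construct hn (isT : 0 < 2) hn1p (esym hn1) HC.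
exists C2; split => //.
have hX := X_part2 H.
rewrite Hc2 Hcard J1 /J42 -hn1 -/(Xn n).
have eX := divn_eq (Xn n) 4; rewrite hX in eX.
move: eX; set q := Xn n %/ 4 => ->; lia.
Qed.
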